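(* Let $F\subsetneq K$ be fields of characteristic $0$, with $F$ a proper nonempty subfield of $K$. Let $p(x)=\sum_{k=0}^{n}a_k x^k\in K[x]$ be non-constant with $a_n\neq 0$, and let $q(x)=\sum_{j=0}^{m}b_j x^j\in K[x]\setminus F[x]$ with $b_m\neq 0$. Suppose $a_n,b_m,b_0\in F$. Then $p\circ q\notin F[x]$ and $D_F(p\circ q)=D_F(q)$.
   Context: For sets $F\subset K$ and $p(x)=\sum_{k=0}^{n}a_kx^k\in K[x]$ with $a_n\neq 0$, the $F$ deficit $D_F(p)$ is defined as follows: if $p\in K[x]\setminus F[x]$, then $D_F(p)=n-\max\{0\le k\le n: a_k\notin F\}$; if $p\in F[x]$, then $D_F(p)=n$. Here $F[x]$ denotes the set of polynomials with all coefficients in $F$. *)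

(* Defs.v *)
From mathcomp Require Import all_boot all_order all_algebra.
Set Implicit Arguments. Unset Strict Implicit. Unset Printing Implicit Defensive.
Import GRing.Theory.
Local Open Scope ring_scope.

Definition is_subfield (K : fieldType) (F : {pred K}) : Prop :=
  0 \in F /\ 1 \in F /\
  (forall x y, x \in F -> y \in F -> x + y \in F) /\
  (forall x, x \in F -> - x \in F) /\
  (forall x y, x \in F -> y \in F -> x * y \in F) /\
  (forall x, x \in F -> x^-1 \in F).

Definition deficit (K : fieldType) (F : {pred K}) (p : {poly K}) : nat :=
  if p \is a polyOver F then (size p).-1
  else subn (size p).-1 (\max_(k < size p | (p`_k)%R \notin F) (k : nat))%N.

(* Main.v *)
Require Import Defs.
From mathcomp Require Import all_boot all_order all_algebra.
From mathcomp Require Import zify.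
Import GRing.Theory.
Set Implicit Arguments. Unset Strict Implicit.

Lemma A1 n m r t : 0 < r -> n * m + r <= t -> (n * m).+1 <= t. Proof. lia. Qed.
Lemma A2 n m r t s1 s2 : s1 <= r -> s2 <= (n * m).+1 -> n * m + r <= t -> (s1 + s2).-1 <= t.
Proof. lia. Qed.
Lemma A3 n m r t : n * m + r <= t -> (t < r) = false. Proof. lia. Qed.
Lemma A4 n m r s : s.-1 = n.+1 * m -> r < m -> n * m + r < s. Proof. rewrite mulSn; lia. Qed.
Lemma A5 n m r i : n * m + r < i -> (n * m).+1 <= i - r. Proof. lia. Qed.
Lemma A6 n m r : r < m -> n.+1 * m - (n * m + r) = m - r. Proof. rewrite mulSn; lia. Qed.
Lemma A7 r i : r < i -> ((i < r) = false) * ((i == r) = false). Proof. split; lia. Qed.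
Lemma A8 r i : i < r -> ((r < i) = false) * ((i == r) = false). Proof. split; lia. Qed.

Local Open Scope ring_scope.

Lemma size_expE (K : idomainType) (X : {poly K}) m j :
  size X = m.+1 -> size (X ^+ j) = (m * j).+1.
Proof.
move=> sX; have nz : X != 0 by rewrite -size_poly_eq0 sX.
by rewrite (polySpred (expf_neq0 _ nz)) size_exp sX.
Qed.

Lemma coef_powmix (K : idomainType) (X Y : {poly K}) m b j k :
  size X = m.+1 -> size Y = m.+1 -> lead_coef X = b -> lead_coef Y = b ->
  size (X ^+ j * Y ^+ k) = ((j + k) * m).+1 /\
  (X ^+ j * Y ^+ k)`_((j + k) * m) = b ^+ (j + k).
Proof.
move=> sX sY lX lY.
have nzX : X != 0 by rewrite -size_poly_eq0 sX.
have nzY : Y != 0 by rewrite -size_poly_eq0 sY.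
have s : size (X ^+ j * Y ^+ k) = ((j + k) * m).+1.
  rewrite size_mul ?expf_neq0 // (size_expE j sX) (size_expE k sY) /=; lia.
split=> //.
have -> : ((j + k) * m)%N = (size (X ^+ j * Y ^+ k)).-1 by rewrite s.
by rewrite -lead_coefE lead_coefM !lead_coef_exp lX lY exprD.
Qed.

Lemma natK0 (K : fieldType) (charK0 : [pchar K] =i pred0) n : n.+1%:R != 0 :> K.
Proof.
rewrite natf_neq0_pchar; apply/pnatP => // p pr _.
by rewrite inE /= charK0.
Qed.


Lemma deficit_at (K : fieldType) (F : {pred K}) (u : {poly K}) N :
  (N < size u)%N -> u`_N \notin F -> (forall i, (N < i)%N -> u`_i \in F) ->
  u \isn't a polyOver F /\ deficit F u = ((size u).-1 - N)%N.
Proof.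
move=> NS uN hi.
have nF : u \isn't a polyOver F.
  by apply/negP => /(all_nthP 0) H; move: uN; have := H N NS; rewrite /= => ->.
split=> //; rewrite /deficit (negbTE nF); congr (_ - _)%N.
apply/eqP; rewrite eqn_leq; apply/andP; split.
  apply/bigmax_leqP => i Hi; rewrite leqNgt; apply/negP => /hi Hi'.
  by rewrite Hi' in Hi.
exact: (leq_bigmax_cond (Ordinal NS) uN).
Qed.

Section Clos.
Variables (K : fieldType) (F : {pred K}) (subF : is_subfield F).

Lemma F0 : 0 \in F. Proof. by move: subF => [h _]. Qed.
Lemma F1 : 1 \in F. Proof. by move: subF => [_ [h _]]. Qed.
Lemma FD x y : x \in F -> y \in F -> x + y \in F.
Proof. by move: subF => [_ [_ [h _]]]; apply: h. Qed.
Lemma FN x : x \in F -> - x \in F.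
Proof. by move: subF => [_ [_ [_ [h _]]]]; apply: h. Qed.
Lemma FM x y : x \in F -> y \in F -> x * y \in F.
Proof. by move: subF => [_ [_ [_ [_ [h _]]]]]; apply: h. Qed.
Lemma FV x : x \in F -> x^-1 \in F.
Proof. by move: subF => [_ [_ [_ [_ [_ h]]]]]; apply: h. Qed.

Lemma FX x n : x \in F -> x ^+ n \in F.
Proof. by move=> Hx; elim: n => [|n IH]; rewrite ?expr0 ?F1 // exprS FM. Qed.

Lemma Fn n : n%:R \in F.
Proof. by elim: n => [|n IH]; rewrite ?F0 // -addn1 natrD FD // F1. Qed.

Lemma FMn x n : x \in F -> x *+ n \in F.
Proof. by move=> Hx; rewrite -mulr_natr FM // Fn. Qed.

Lemma polyFM (X Y : {poly K}) : (forall i, X`_i \in F) -> (forall i, Y`_i \in F) ->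
  forall i, (X * Y)`_i \in F.
Proof.
move=> hX hY i; rewrite coefM; elim/big_ind: _ => //; first exact: F0.
  exact: FD.
by move=> j _; apply: FM.
Qed.

Lemma polyFX (X : {poly K}) n : (forall i, X`_i \in F) -> forall i, (X ^+ n)`_i \in F.
Proof.
move=> hX; elim: n => [|n IH] i.
  by rewrite expr0 coefC; case: eqP => _; [exact: F1 | exact: F0].
by rewrite exprS; apply: polyFM.
Qed.
End Clos.


Theorem corollary3 (K : fieldType) (F : {pred K})
  (charK0 : [pchar K] =i pred0)
  (subF : is_subfield F) (properF : exists x : K, x \notin F)
  (p q : {poly K})
  (p_nonconst : (1 < size p)%N)
  (q_notF : q \isn't a polyOver F)
  (lead_p : lead_coef p \in F) (lead_q : lead_coef q \in F)
  (q0 : q`_0 \in F) :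
  (p \Po q) \isn't a polyOver F /\ deficit F (p \Po q) = deficit F q.
Proof.
have F0' := F0 subF.
have : ~~ [forall i : 'I_(size q), q`_i \in F].
  apply: contra q_notF => /forallP H; apply/(all_nthP 0) => i Hi.
  exact: (H (Ordinal Hi)).
case/forallPn => k0 k0F.
have exP : exists i, (i < size q)%N && (q`_i \notin F).
  by exists k0; rewrite ltn_ord.
have [m Hm] : exists m, size q = m.+1.
  by exists (size q).-1; rewrite prednK // (leq_ltn_trans _ (ltn_ord k0)).
have ubP : forall i, (i < size q)%N && (q`_i \notin F) -> (i <= m)%N.
  by move=> i /andP [+ _]; rewrite Hm.
have [r /andP [rlt cr] maxr] := ex_maxnP exP ubP.
have hiq : forall i, (r < i)%N -> q`_i \in F.
  move=> i ri; have [iq|iq] := ltnP i (size q).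
    apply: contraT => iF; have := maxr i; rewrite iq iF => /(_ isT).
    by rewrite leqNgt ri.
  by rewrite nth_default.
have lqm : lead_coef q = q`_m by rewrite lead_coefE Hm.
have r0 : (0 < r)%N by case: r rlt cr {maxr hiq} => //; rewrite q0.
have rm : (r < m)%N.
  rewrite ltn_neqAle -ltnS -Hm rlt andbT; apply/eqP => e.
  by move: cr; rewrite e -lqm lead_q.
have [_ defq] := deficit_at rlt cr hiq.
rewrite defq Hm /=.
have [n Hn] : exists n, size p = n.+2 
  by exists (size p).-2; move: p_nonconst; case: (size p) => [|[|k]].
set a := lead_coef p; set b := lead_coef q; set c := q`_r.
have nzq : q != 0 by rewrite -size_poly_eq0 Hm.
have nzp : p != 0 by rewrite -size_poly_eq0 Hn.
have nzb : b != 0 by rewrite lead_coef_eq0.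
have nza : a != 0 by rewrite lead_coef_eq0.
set S := take_poly r q + c *: 'X^r.
set B := q - S.
have coefB : forall i, B`_i = if (r < i)%N then q`_i else 0.
  move=> i; rewrite /B /S coefB coefD coefZ coefXn coef_take_poly.
  have [ri|] := ltnP r i.
    by rewrite !(A7 ri) mulr0 add0r subr0.
  rewrite leq_eqVlt => /orP [/eqP ->|ir].
    by rewrite ltnn eqxx mulr1 add0r subrr.
  by rewrite ir (A8 ir).2 mulr0 addr0 subrr.
have BF : forall i, B`_i \in F by move=> i; rewrite coefB; case: ifP => // /hiq.
have sS : (size S <= r.+1)%N.
  rewrite (leq_trans (size_add _ _)) // geq_max (leq_trans (size_take_poly _ _)) //.
  by rewrite (leq_trans (size_scale_leq _ _)) // size_polyXn.
have eB : B = q + - S by [].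
have sL : (size (- S) < size q)%N by rewrite size_opp Hm (leq_ltn_trans sS).
have sB : size B = m.+1 by rewrite eB size_polyDl // Hm.
have lB : lead_coef B = b by rewrite eB lead_coefDl.
set T := \sum_(i < n.+1) q ^+ (n - i) * B ^+ i.
have eq_qn : q ^+ n.+1 = B ^+ n.+1 + S * T.
  have := subrXX q B n.+1; rewrite /= -/T.
  have -> : q - B = S by rewrite /B opprB addrC subrK.
  by move<-; rewrite addrC subrK.
have sT : (size T <= (n * m).+1)%N.
  rewrite (leq_trans (size_sum _ _ _)) //; apply/bigmax_leqP => i _.
  have [-> _] := coef_powmix (n - i) i Hm sB erefl lB.
  by rewrite subnK // -ltnS.
have cT : T`_(n * m) = b ^+ n *+ n.+1.
  rewrite coef_sum.
  rewrite (eq_bigr (fun _ => b ^+ n)); first by rewrite sumr_const card_ord.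
  move=> i _; have [_] := coef_powmix (n - i) i Hm sB erefl lB.
  by rewrite subnK // -ltnS.
have eu : p \Po q = \sum_(i < n.+1) p`_i *: q ^+ i + a *: q ^+ n.+1.
  rewrite comp_polyE Hn big_ord_recr /=; congr (_ + _).
  by rewrite /a lead_coefE Hn.
set L := \sum_(i < n.+1) p`_i *: q ^+ i in eu.
have sLL : (size L <= (n * m).+1)%N.
  rewrite (leq_trans (size_sum _ _ _)) //; apply/bigmax_leqP => i _.
  rewrite (leq_trans (size_scale_leq _ _)) // (size_expE i Hm) ltnS mulnC leq_mul2r.
  by rewrite -ltnS ltn_ord orbT.
set N := (n * m + r)%N.
have coefu : forall t, (N <= t)%N ->
    (p \Po q)`_t = a * (B ^+ n.+1)`_t + a * (c * T`_(t - r)).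
  move=> t Nt; rewrite eu coefD coefZ eq_qn coefD mulrDr.
  rewrite (nth_default _ (leq_trans sLL _)); last exact: A1 Nt.
  rewrite add0r; congr (_ + _); congr (_ * _).
  rewrite /S mulrDl coefD (nth_default _ (leq_trans (size_mul_leq _ _) _)); last first.
    exact: A2 (size_take_poly r q) sT Nt.
  by rewrite add0r -scalerAl coefZ coefXnM (A3 Nt).
have NS : (N < size (p \Po q))%N.
  by apply: A4 rm; rewrite size_comp_poly Hn Hm.
have uN : (p \Po q)`_N \notin F.
  rewrite coefu // /N addnK cT.
  set X := (B ^+ n.+1)`_(n * m + r).
  have XF : X \in F by exact: polyFX.
  set w := a * (b ^+ n *+ n.+1).
  have nzw : w != 0.
    by rewrite /w mulf_neq0 // -mulr_natr mulf_neq0 ?expf_neq0 ?natK0.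
  have wF : w \in F by rewrite /w FM // FMn // FX.
  apply/negP => H; move: cr; rewrite -/c => /negP; apply.
  have -> : c = (a * X + a * (c * (b ^+ n *+ n.+1)) + - (a * X)) * w^-1.
    by rewrite addrC addKr /w mulrCA mulfK.
  by rewrite FM // ?FV // FD // FN // FM.
have uhi : forall i, (N < i)%N -> (p \Po q)`_i \in F.
  move=> i Ni; have Ni' := ltnW Ni.
  rewrite (coefu i Ni') (nth_default 0 (leq_trans sT (A5 Ni))) mulr0 mulr0 addr0.
  by apply: (FM subF) => //; apply: (polyFX subF n.+1 BF).
have [-> ->] := deficit_at NS uN uhi; split=> //.
by rewrite size_comp_poly Hn Hm /= /N A6.
Qed.
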